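(* Let $A$ be a simple infinite-dimensional unital $C^*$-algebra which is not purely infinite, and let $x\in A_+\setminus\{0\}$. Then for every $\varepsilon>0$ there is $y\in (\overline{xAx})_+\setminus\{0\}$ such that whenever $f\in A$ satisfies $0\le f\le 1$ and $1-f\precsim y$, one has $\|f\|>1-\varepsilon$.
   Context: For positive elements $a,b$ of a $C^*$-algebra $A$, $a\precsim b$ (Cuntz subequivalence) means there is a sequence $(v_n)$ in $A$ with $\|a-v_nbv_n^*\|\to 0$. A simple unital $C^*$-algebra $A$ is purely infinite if it is infinite-dimensional and for every non-zero $a\in A$ there are $x,y\in A$ with $xay=1$. $\overline{xAx}$ denotes the hereditary subalgebra (norm closure of $xAx$). *)

(* Defs.v *)
From mathcomp Require Import all_boot all_order all_algebra.
From mathcomp Require Import complex reals.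
Set Implicit Arguments. Unset Strict Implicit. Unset Printing Implicit Defensive.
Import Order.TTheory GRing.Theory Num.Theory.
Local Open Scope ring_scope.
Local Open Scope complex_scope.

Section CStar.
Variables (R : realType) (A : algType R[i]) (nrm : A -> R) (st : A -> A).

Definition cvg_nrm (u : nat -> A) (l : A) : Prop :=
  forall e : R, 0 < e -> exists N : nat, forall n, (N <= n)%N -> nrm (u n - l) < e.

Definition cauchy_nrm (u : nat -> A) : Prop :=
  forall e : R, 0 < e -> exists N : nat, forall m n, (N <= m)%N -> (N <= n)%N ->
    nrm (u m - u n) < e.

Record is_cstar_algebra : Prop := {
  cs_one_neq0 : (1 : A) != 0;
  cs_nrm_ge0 : forall a, 0 <= nrm a;
  cs_nrm_eq0 : forall a, nrm a = 0 -> a = 0;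
  cs_nrm_tri : forall a b, nrm (a + b) <= nrm a + nrm b;
  cs_nrm_scale : forall (c : R[i]) a, nrm (c *: a) = ComplexField.Normc.normc c * nrm a;
  cs_nrm_mul : forall a b, nrm (a * b) <= nrm a * nrm b;
  cs_complete : forall u, cauchy_nrm u -> exists l, cvg_nrm u l;
  cs_st_add : forall a b, st (a + b) = st a + st b;
  cs_st_scale : forall (c : R[i]) a, st (c *: a) = (c^*)%C *: st a;
  cs_st_mul : forall a b, st (a * b) = st b * st a;
  cs_st_invol : forall a, st (st a) = a;
  cs_cstar_id : forall a, nrm (st a * a) = nrm a ^+ 2
}.

Definition invertible (a : A) : Prop := exists b : A, a * b = 1 /\ b * a = 1.

Definition spectrum (a : A) : R[i] -> Prop :=
  fun lam => ~ invertible (a - lam%:A).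

Definition positive (a : A) : Prop :=
  st a = a /\ forall lam : R[i], spectrum a lam -> 0 <= lam.

Definition cuntz_le (a b : A) : Prop :=
  exists v : nat -> A, cvg_nrm (fun n => v n * b * st (v n)) a.

Definition closed_ideal (I : A -> Prop) : Prop :=
  [/\ I 0,
      (forall a b, I a -> I b -> I (a + b)),
      (forall (c : R[i]) a, I a -> I (c *: a)),
      (forall a b, I b -> I (a * b) /\ I (b * a)) &
      (forall u l, (forall n, I (u n)) -> cvg_nrm u l -> I l)].

Definition simple_alg : Prop :=
  forall I, closed_ideal I -> (forall a, I a -> a = 0) \/ (forall a, I a).

Definition finite_dim : Prop :=
  exists s : seq A, forall a : A, exists c : 'I_(size s) -> R[i],
    a = \sum_(i < size s) c i *: s`_i.

Definition purely_infinite : Prop :=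
  ~ finite_dim /\ forall a : A, a != 0 -> exists x y : A, x * a * y = 1.

(* membership in the hereditary subalgebra: norm closure of xAx *)
Definition in_hered (x y : A) : Prop :=
  forall e : R, 0 < e -> exists a : A, nrm (y - x * a * x) < e.

End CStar.

(* Main.v *)
Require Import Defs.
From mathcomp Require Import all_boot all_order all_algebra.
From mathcomp Require Import complex reals.
From mathcomp Require Import ring lra.
From Stdlib Require Import Classical.
Import Order.TTheory GRing.Theory Num.Theory.
Local Open Scope ring_scope.


Lemma bernoulli_ (R : realType) (h : R) (n : nat) : 0 <= h -> 1 + n%:R * h <= (1 + h) ^+ n.
Proof.
move=> h0; elim: n => [|n IH]; first by rewrite mul0r addr0 expr0.
rewrite exprS -natr1.
have H1 : 0 <= (n%:R : R) by rewrite ler0n.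
nra.
Qed.

Lemma pow_small (R : realType) (r e : R) : 0 <= r -> r < 1 -> 0 < e ->
  exists N : nat, r ^+ N < e.
Proof.
move=> r0 r1 e0.
have [->|rn0] := eqVneq r 0; first by exists 1%N; rewrite expr1.
have rp : 0 < r by rewrite lt_def rn0 r0.
set h := r^-1 - 1.
have hp : 0 < h.
  by rewrite /h subr_gt0 invf_gt1.
set n := Num.Def.archi_bound (e^-1 / h).
have hb : e^-1 / h < n%:R.
  apply: archi_boundP; by rewrite divr_ge0 // ?invr_ge0 ?ltW.
exists n.
have B := @bernoulli_ R h n (ltW hp).
have e1 : e * e^-1 = 1 by rewrite mulfV // gt_eqF.
have h1 : h * h^-1 = 1 by rewrite mulfV // gt_eqF.
have r1' : r * r^-1 = 1 by rewrite mulfV // gt_eqF.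
have E : (1 + h) = r^-1 by rewrite /h addrC subrK.
rewrite E exprVn in B.
have rn : 0 < r ^+ n by rewrite exprn_gt0.
have rr : r ^+ n * (r ^+ n)^-1 = 1 by rewrite mulfV // gt_eqF.
have ei : 0 < e^-1 by rewrite invr_gt0.
have hi : 0 < h^-1 by rewrite invr_gt0.
have nn : 0 <= (n%:R : R) by rewrite ler0n.
(* e^-1 < n h <= r^-n *)
have X : e^-1 < (r ^+ n)^-1.
  have : e^-1 / h * h < n%:R * h by rewrite ltr_pM2r.
  rewrite -mulrA mulVf ?gt_eqF // mulr1 => Y.
  lra.
have : r ^+ n * e^-1 < r ^+ n * (r ^+ n)^-1 by rewrite ltr_pM2l.
rewrite rr => Z.
have : r ^+ n * e^-1 * e < 1 * e by rewrite ltr_pM2r.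
by rewrite -mulrA mulVf ?gt_eqF // mulr1 mul1r.
Qed.


Lemma nrm0_ {R : realType} {A : algType R[i]} {nrm : A -> R} {st : A -> A}
  (HA : is_cstar_algebra nrm st) : nrm 0 = 0.
Proof. by have := cs_nrm_scale HA 0 0; rewrite scale0r ComplexField.Normc.normc0 mul0r. Qed.

Lemma nrmN_ {R : realType} {A : algType R[i]} {nrm : A -> R} {st : A -> A}
  (HA : is_cstar_algebra nrm st) a : nrm (- a) = nrm a.
Proof.
have := cs_nrm_scale HA (-1) a.
by rewrite scaleN1r normcN ComplexField.Normc.normc1 mul1r.
Qed.

Lemma nrmB_ {R : realType} {A : algType R[i]} {nrm : A -> R} {st : A -> A}
  (HA : is_cstar_algebra nrm st) a b : nrm (a - b) = nrm (b - a).
Proof. by rewrite -(nrmN_ HA) opprB. Qed.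

Lemma eq0_small_ {R : realType} {A : algType R[i]} {nrm : A -> R} {st : A -> A}
  (HA : is_cstar_algebra nrm st) a : (forall e : R, 0 < e -> nrm a < e) -> a = 0.
Proof.
move=> H; apply: (cs_nrm_eq0 HA).
have g := cs_nrm_ge0 HA a.
have [//|lt] := eqVneq (nrm a) 0.
have p : 0 < nrm a by rewrite lt_def lt g.
by have := H _ p; rewrite ltxx.
Qed.

Lemma st0_ {R : realType} {A : algType R[i]} {nrm : A -> R} {st : A -> A}
  (HA : is_cstar_algebra nrm st) : st 0 = 0.
Proof.
have := cs_st_add HA 0 0; rewrite addr0 => E.
by have := congr1 (fun t => t - st 0) E; rewrite subrr addrK.
Qed.

Lemma stN_ {R : realType} {A : algType R[i]} {nrm : A -> R} {st : A -> A}
  (HA : is_cstar_algebra nrm st) a : st (- a) = - st a.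
Proof.
have := cs_st_add HA a (- a); rewrite subrr (st0_ HA) => /eqP.
by rewrite eq_sym addrC addr_eq0 => /eqP.
Qed.

Lemma stB_ {R : realType} {A : algType R[i]} {nrm : A -> R} {st : A -> A}
  (HA : is_cstar_algebra nrm st) a b : st (a - b) = st a - st b.
Proof. by rewrite (cs_st_add HA) (stN_ HA). Qed.

Lemma st1_ {R : realType} {A : algType R[i]} {nrm : A -> R} {st : A -> A}
  (HA : is_cstar_algebra nrm st) : st 1 = 1.
Proof.
have := cs_st_mul HA (st 1) 1.
by rewrite mulr1 !(cs_st_invol HA) mulr1 => <-.
Qed.

Lemma stC_ {R : realType} {A : algType R[i]} {nrm : A -> R} {st : A -> A}
  (HA : is_cstar_algebra nrm st) (c : R[i]) : st (c%:A) = (c^*)%C%:A.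
Proof. by rewrite (cs_st_scale HA) (st1_ HA). Qed.

Lemma nrm1_ {R : realType} {A : algType R[i]} {nrm : A -> R} {st : A -> A}
  (HA : is_cstar_algebra nrm st) : nrm 1 = 1.
Proof.
have := cs_cstar_id HA 1; rewrite (st1_ HA) mulr1 => E.
have n0 : nrm 1 != 0.
  apply/eqP => /(cs_nrm_eq0 HA) /eqP; by rewrite (negbTE (cs_one_neq0 HA)).
have : nrm 1 * 1 = nrm 1 * nrm 1 by rewrite mulr1 -expr2.
by move/(mulfI n0).
Qed.

Lemma nrmC_ {R : realType} {A : algType R[i]} {nrm : A -> R} {st : A -> A}
  (HA : is_cstar_algebra nrm st) (c : R[i]) : nrm (c%:A) = ComplexField.Normc.normc c.
Proof. by rewrite (cs_nrm_scale HA) (nrm1_ HA) mulr1. Qed.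


Fixpoint psum {R : realType} {A : algType R[i]} (b : A) (n : nat) : A :=
  if n is n'.+1 then psum b n' + b ^+ n' else 0.

Lemma nrm_pow_ {R : realType} {A : algType R[i]} {nrm : A -> R} {st : A -> A}
  (HA : is_cstar_algebra nrm st) b k : nrm (b ^+ k) <= nrm b ^+ k.
Proof.
elim: k => [|k IH]; first by rewrite !expr0 (nrm1_ HA).
rewrite !exprSr; apply: le_trans (cs_nrm_mul HA _ _) _.
apply: ler_wpM2r; first exact: cs_nrm_ge0 HA _.
exact: IH.
Qed.

Lemma psum_mull {R : realType} {A : algType R[i]} (b : A) n :
  (1 - b) * psum b n = 1 - b ^+ n.
Proof.
elim: n => [|n IH] /=; first by rewrite mulr0 expr0 subrr.
by rewrite mulrDr IH exprSr mulrBl mul1r addrA subrK -exprSr exprS.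
Qed.

Lemma psum_mulr {R : realType} {A : algType R[i]} (b : A) n :
  psum b n * (1 - b) = 1 - b ^+ n.
Proof.
elim: n => [|n IH] /=; first by rewrite mul0r expr0 subrr.
by rewrite mulrDl IH mulrBr mulr1 addrA subrK -exprSr.
Qed.

Lemma psum_diff {R : realType} {A : algType R[i]} {nrm : A -> R} {st : A -> A}
  (HA : is_cstar_algebra nrm st) b n d : nrm b < 1 ->
  nrm (psum b (n + d) - psum b n) * (1 - nrm b) <= nrm b ^+ n - nrm b ^+ (n + d).
Proof.
move=> b1; elim: d => [|d IH]; first by rewrite addn0 subrr (nrm0_ HA) mul0r subrr.
rewrite addnS /= addrAC.
have T := cs_nrm_tri HA (psum b (n + d) - psum b n) (b ^+ (n + d)).
have P := nrm_pow_ HA b (n + d).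
have r0 := cs_nrm_ge0 HA b.
set r := nrm b in b1 r0 P T IH *.
have : nrm (psum b (n + d) - psum b n + b ^+ (n + d)) * (1 - r) <=
   (nrm (psum b (n + d) - psum b n) + r ^+ (n + d)) * (1 - r).
  apply: ler_wpM2r; first lra.
  apply: le_trans T _; lra.
rewrite exprSr.
have rp : 0 <= r ^+ (n + d) by rewrite exprn_ge0.
nra.
Qed.

Lemma psum_cauchy {R : realType} {A : algType R[i]} {nrm : A -> R} {st : A -> A}
  (HA : is_cstar_algebra nrm st) b : nrm b < 1 -> cauchy_nrm nrm (psum b).
Proof.
move=> b1 e e0.
have r0 := cs_nrm_ge0 HA b.
have [N HN] : exists N : nat, nrm b ^+ N < e * (1 - nrm b).
  apply: pow_small => //; rewrite mulr_gt0 // subr_gt0 //.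
have key : forall m n, (N <= n)%N -> (n <= m)%N -> nrm (psum b m - psum b n) < e.
  move=> m n Nn nm.
  have := psum_diff HA b n (m - n) b1; rewrite subnKC //.
  have pm : 0 <= nrm b ^+ m by rewrite exprn_ge0.
  have pn : nrm b ^+ n <= nrm b ^+ N.
    rewrite -(subnKC Nn) exprD.
    apply: ler_piMr; first by rewrite exprn_ge0.
    by rewrite exprn_ile1 // ltW.
  move=> H.
  have Q : nrm (psum b m - psum b n) * (1 - nrm b) < e * (1 - nrm b) by lra.
  by rewrite ltr_pM2r ?subr_gt0 in Q.
exists N => m n Nm Nn.
have [nm|mn] := leqP n m; first exact: key.
rewrite (nrmB_ HA); apply: key => //; exact: ltnW.
Qed.


Lemma lim_aux {R : realType} {A : algType R[i]} {nrm : A -> R} {st : A -> A}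
  (HA : is_cstar_algebra nrm st) (u : nat -> A) l (c : A) (r : R) (side : bool) :
  cvg_nrm nrm u l -> 0 <= r -> r < 1 ->
  (forall n, nrm ((if side then c * u n else u n * c) - 1) <= r ^+ n) ->
  (if side then c * l else l * c) = 1.
Proof.
move=> cv r0 r1 H; apply/eqP; rewrite -subr_eq0; apply/eqP.
apply: (eq0_small_ HA) => e e0.
have c0 := cs_nrm_ge0 HA c.
set K := nrm c + 1.
have K0 : 0 < K by rewrite /K; lra.
have [N1 HN1] := cv (e / 2 / K) ltac:(by rewrite !divr_gt0).
have [N2 HN2] := @pow_small R r (e / 2) r0 r1 (ltac:(by rewrite divr_gt0) : 0 < e / 2).
set n := maxn N1 N2.
have := HN1 n (leq_maxl _ _); rewrite (nrmB_ HA) => Hn.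
have pn : r ^+ n <= r ^+ N2.
  rewrite /n -(subnKC (leq_maxr N1 N2)) exprD.
  apply: ler_piMr; first by rewrite exprn_ge0.
  by rewrite exprn_ile1 // ltW.
have Hb := H n.
have g := cs_nrm_ge0 HA (l - u n).
have KK : K * (e / 2 / K) = e / 2 by rewrite mulrC divfK // gt_eqF.
case: side H Hb => /= H Hb.
- have -> : c * l - 1 = c * (l - u n) + (c * u n - 1).
    by rewrite mulrBr addrA subrK.
  apply: le_lt_trans (cs_nrm_tri HA _ _) _.
  have M := cs_nrm_mul HA c (l - u n).
  have : nrm c * nrm (l - u n) <= K * (e / 2 / K).
    by apply: ler_pM => //; rewrite /K; lra.
  lra.
- have -> : l * c - 1 = (l - u n) * c + (u n * c - 1).
    by rewrite mulrBl addrA subrK.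
  apply: le_lt_trans (cs_nrm_tri HA _ _) _.
  have M := cs_nrm_mul HA (l - u n) c.
  have : nrm (l - u n) * nrm c <= (e / 2 / K) * K.
    by apply: ler_pM => //; rewrite /K; lra.
  rewrite [_ * K]mulrC KK.
  lra.
Qed.

Lemma neumann_ {R : realType} {A : algType R[i]} {nrm : A -> R} {st : A -> A}
  (HA : is_cstar_algebra nrm st) (b : A) : nrm b < 1 -> invertible (1 - b).
Proof.
move=> b1.
have [l Hl] := cs_complete HA (psum_cauchy HA b b1).
have r0 := cs_nrm_ge0 HA b.
have Hp : forall n, nrm (- b ^+ n) <= nrm b ^+ n.
  by move=> n; rewrite (nrmN_ HA); exact: nrm_pow_ HA b n.
exists l; split.
- apply: (lim_aux HA (psum b) l (1 - b) (nrm b) true Hl r0 b1) => n /=.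
  by rewrite psum_mull addrAC subrr add0r.
- apply: (lim_aux HA (psum b) l (1 - b) (nrm b) false Hl r0 b1) => n /=.
  by rewrite psum_mulr addrAC subrr add0r.
Qed.


Lemma inv_scale {R : realType} {A : algType R[i]} (k : R[i]) (X : A) :
  k != 0 -> invertible X -> invertible (k *: X).
Proof.
move=> k0 [w [H1 H2]]; exists (k^-1 *: w); split.
- by rewrite -scalerAr -scalerAl scalerA ?mulfV ?mulVf // scale1r H1.
- by rewrite -scalerAr -scalerAl scalerA ?mulfV ?mulVf // scale1r H2.
Qed.

Lemma inv_mul {R : realType} {A : algType R[i]} (X Y : A) :
  invertible X -> invertible Y -> invertible (X * Y).
Proof.
move=> [u [H1 H2]] [v [H3 H4]]; exists (v * u); split.
- by rewrite mulrA -(mulrA X) H3 mulr1 H1.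
- by rewrite mulrA -(mulrA v) H2 mulr1 H4.
Qed.

Lemma inv_big {R : realType} {A : algType R[i]} {nrm : A -> R} {st : A -> A}
  (HA : is_cstar_algebra nrm st) (a : A) (nu : R[i]) :
  nrm a < ComplexField.Normc.normc nu -> invertible (a - nu%:A).
Proof.
move=> H.
have nu0 : nu != 0.
  apply/eqP => E; move: H; rewrite E ComplexField.Normc.normc0.
  by rewrite ltNge (cs_nrm_ge0 HA).
have -> : a - nu%:A = (- nu) *: (1 - nu^-1 *: a).
  by rewrite scalerBr scalerA mulNr mulfV // scaleN1r opprK scaleNr addrC.
apply: inv_scale; first by rewrite oppr_eq0.
apply: (neumann_ HA).
rewrite (cs_nrm_scale HA) ComplexField.Normc.normcV.
have p : 0 < ComplexField.Normc.normc nu.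
  by apply: le_lt_trans H; exact: cs_nrm_ge0 HA _.
by rewrite ltr_pdivrMl // mulr1.
Qed.

Lemma alg_mul_id {R : realType} {A : algType R[i]} (a : A) (p q : R[i]) :
  (a + p%:A) * (a + q%:A) = a * a + (p + q) *: a + (p * q)%:A.
Proof.
rewrite mulrDl !mulrDr mulr_algr mulr_algl.
rewrite -scalerAl mul1r scalerA scalerDl.
by rewrite !addrA; congr (_ + _); exact: addrAC.
Qed.


Lemma normc_Cx {R : realType} (x y : R) :
  ComplexField.Normc.normc (Complex x y) ^+ 2 = x ^+ 2 + y ^+ 2.
Proof. by rewrite /= sqr_sqrtr // addr_ge0 ?sqr_ge0. Qed.

Lemma sa_inv {R : realType} {A : algType R[i]} {nrm : A -> R} {st : A -> A}
  (HA : is_cstar_algebra nrm st) (a : A) (mu : R[i]) :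
  st a = a -> complex.Im mu != 0 -> invertible (a - mu%:A).
Proof.
case: mu => al be /= sa hb.
set M := nrm a.
have M0 : 0 <= M := cs_nrm_ge0 HA a.
set s := (M ^+ 2 + 1) / (2 * be).
have hs : s * (2 * be) = M ^+ 2 + 1.
  have hb' : be != 0 := hb.
  have two : (2 : R) != 0 by rewrite pnatr_eq0.
  by rewrite /s divfK // mulf_neq0.
set c : R[i] := Complex 0 s.
have key : nrm (a + c%:A) ^+ 2 <= M ^+ 2 + s ^+ 2.
  rewrite -(cs_cstar_id HA) (cs_st_add HA) (stC_ HA) sa alg_mul_id.
  have E1 : (c^*)%C + c = 0.
    by apply/eqP; rewrite eq_complex /= addNr addr0 eqxx.
  have E2 : (c^*)%C * c = Complex (s ^+ 2) 0.
    by apply/eqP; rewrite eq_complex /=; apply/andP; split; apply/eqP; ring.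
  rewrite E1 scale0r addr0 E2.
  apply: le_trans (cs_nrm_tri HA _ _) _.
  rewrite (nrmC_ HA).
  have N1 : ComplexField.Normc.normc (Complex (s ^+ 2) 0) = s ^+ 2.
    by rewrite /= expr0n /= addr0 sqrtr_sqr ger0_norm // sqr_ge0.
  rewrite N1 lerD2r.
  apply: le_trans (cs_nrm_mul HA _ _) _; by rewrite expr2.
apply: NNPP => ninv.
set nu : R[i] := Complex al (be + s).
have E : a - (Complex al be)%:A = (a + c%:A) - nu%:A.
  have -> : nu = Complex al be + c.
    by apply/eqP; rewrite eq_complex /= addr0 !eqxx.
  by rewrite scalerDl opprD addrACA subrr addr0.
have : ~ (nrm (a + c%:A) < ComplexField.Normc.normc nu).
  by move=> H; apply: ninv; rewrite E; apply: inv_big HA _ _ H.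
move/negP; rewrite -leNgt => L.
have n0 : 0 <= ComplexField.Normc.normc nu.
  by rewrite /= sqrtr_ge0.
have L2 : ComplexField.Normc.normc nu ^+ 2 <= nrm (a + c%:A) ^+ 2.
  have g := cs_nrm_ge0 HA (a + c%:A); nra.
rewrite /nu normc_Cx in L2.
have s2 : 0 <= al ^+ 2 by rewrite sqr_ge0.
have b2 : 0 <= be ^+ 2 by rewrite sqr_ge0.
move: key L2 hs s2 b2; clear; move: (nrm (a + c%:A)) => X.
move=> *; nra.
Qed.


Lemma sa_inv' {R : realType} {A : algType R[i]} {nrm : A -> R} {st : A -> A}
  (HA : is_cstar_algebra nrm st) (a : A) (p : R[i]) :
  st a = a -> complex.Im p != 0 -> invertible (a + p%:A).
Proof.
move=> sa hp; have -> : a + p%:A = a - (- p)%:A by rewrite scaleNr opprK.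
apply: (sa_inv HA) => //; case: p hp => x y /= hp.
by rewrite oppr_eq0.
Qed.

Lemma sq_pos {R : realType} {A : algType R[i]} {nrm : A -> R} {st : A -> A}
  (HA : is_cstar_algebra nrm st) (z : A) : st z = z -> positive st (z * z).
Proof.
move=> sz.
have szz : st (z * z) = z * z by rewrite (cs_st_mul HA) sz.
split => // lam sp.
apply: NNPP => nl; apply: sp.
have [hi|hi] := eqVneq (complex.Im lam) 0; last exact: sa_inv HA _ _ szz hi.
case: lam nl hi => l y nl /= hy; subst y.
have l0 : l < 0.
  rewrite ltNge; apply/negP => l0; apply: nl.
  by rewrite lecE /= eqxx l0.
set r := Num.sqrt (- l).
have r0 : 0 < r by rewrite sqrtr_gt0 oppr_gt0.
have r2 : r ^+ 2 = - l by rewrite sqr_sqrtr // oppr_ge0 ltW.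
have -> : z * z - (Complex l 0)%:A = (z + (Complex 0 r)%:A) * (z + (Complex 0 (- r))%:A).
  rewrite alg_mul_id.
  have E1 : Complex 0 r + Complex 0 (- r) = 0 :> R[i].
    by apply/eqP; rewrite eq_complex /= subrr addr0 eqxx.
  have E2 : Complex 0 r * Complex 0 (- r) = - Complex l 0 :> R[i].
    apply/eqP; rewrite eq_complex /=; apply/andP; split; apply/eqP.
      rewrite -r2; ring.
    ring.
  by rewrite E1 scale0r addr0 E2 scaleNr.
apply: inv_mul; apply: (sa_inv' HA) => //=.
  by rewrite gt_eqF.
by rewrite oppr_eq0 gt_eqF.
Qed.


Lemma nrm_mul3 {R : realType} {A : algType R[i]} {nrm : A -> R} {st : A -> A}
  (HA : is_cstar_algebra nrm st) (p q r : A) : nrm (p * q * r) <= nrm p * nrm q * nrm r.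
Proof.
apply: le_trans (cs_nrm_mul HA _ _) _.
apply: ler_wpM2r; first exact: cs_nrm_ge0 HA _.
exact: cs_nrm_mul HA _ _.
Qed.

Lemma ideal_I {R : realType} {A : algType R[i]} {nrm : A -> R} {st : A -> A}
  (HA : is_cstar_algebra nrm st) (x : A) :
  closed_ideal nrm (fun z => forall c d, x * c * z * d = 0).
Proof.
split.
- by move=> c d; rewrite mulr0 mul0r.
- by move=> a b Ha Hb c d; rewrite mulrDr mulrDl Ha Hb addr0.
- by move=> k a Ha c d; rewrite -scalerAr -scalerAl Ha scaler0.
- move=> a b Hb; split => c d.
  + by have := Hb (c * a) d; rewrite !mulrA.
  + by have := Hb c (a * d); rewrite !mulrA.
- move=> u l Hu cv c d; apply: (eq0_small_ HA) => e e0.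
  set K := (nrm (x * c) + 1) * (nrm d + 1).
  have g1 := cs_nrm_ge0 HA (x * c); have g2 := cs_nrm_ge0 HA d.
  have K0 : 0 < K by rewrite /K mulr_gt0 //; lra.
  have [N HN] := cv (e / K) ltac:(by rewrite divr_gt0).
  have HNN := HN N (leqnn N).
  rewrite (nrmB_ HA) in HNN.
  have -> : x * c * l * d = x * c * (l - u N) * d.
    by rewrite mulrBr mulrBl Hu subr0.
  apply: le_lt_trans (nrm_mul3 HA _ _ _) _.
  have g3 := cs_nrm_ge0 HA (l - u N).
  have KK : K * (e / K) = e by rewrite mulrC divfK // gt_eqF.
  move: g1 g2 g3 HNN; set P := nrm (x * c); set D := nrm d; set t := nrm (l - u N) => g1 g2 g3 HNN.
  have L1 : P * t * D <= (P + 1) * t * (D + 1).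
    apply: ler_pM; [by rewrite mulr_ge0| done| |lra].
    apply: ler_pM => //; lra.
  have L2 : (P + 1) * t * (D + 1) < (P + 1) * (e / K) * (D + 1).
    have D1 : 0 < D + 1 by lra.
    have P1 : 0 < P + 1 by lra.
    by rewrite (ltr_pM2r D1) (ltr_pM2l P1).
  have L3 : (P + 1) * (e / K) * (D + 1) = e.
    by rewrite mulrAC -/K KK.
  lra.
Qed.


Theorem lemma3p3 (R : realType) (A : algType R[i]) (nrm : A -> R) (st : A -> A)
  (HA : is_cstar_algebra nrm st) (Hsimple : simple_alg nrm)
  (Hinf : ~ finite_dim A) (Hnpi : ~ purely_infinite A)
  (x : A) (Hx : positive st x) (Hx0 : x != 0)
  (eps : R) (Heps : 0 < eps) :
  exists y : A,
    [/\ in_hered nrm x y, positive st y, y != 0 &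
        forall f : A, positive st f -> positive st (1 - f) ->
          cuntz_le nrm st (1 - f) y -> 1 - eps < nrm f].
Proof.
have [a [a0 Ha]] : exists a : A, a != 0 /\ forall p q, p * a * q <> 1.
  apply: NNPP => H; apply: Hnpi; split => // a a0.
  apply: NNPP => H2; apply: H; exists a; split => // p q E.
  by apply: H2; exists p, q.
have [c Hc] : exists c, x * c * a != 0.
  apply: NNPP => H.
  have H0 : forall c, x * c * a = 0.
    by move=> c; apply/eqP; apply: NNPP => /negP E; apply: H; exists c.
  case: (Hsimple _ (ideal_I HA x)) => [H1|H1].
  - by move/eqP: a0; apply; apply: H1 => c d; rewrite H0 mul0r.
  - by move/eqP: Hx0; apply; have := H1 1 1 1; rewrite !mulr1.
have sx : st x = x by case: Hx.
set w := x * c * a.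
set z := w * st w.
have sz : st z = z by rewrite /z (cs_st_mul HA) (cs_st_invol HA).
have stw0 : st w != 0.
  apply/eqP => E; move/eqP: Hc; apply.
  by rewrite -/w -(cs_st_invol HA w) E (st0_ HA).
have nz : nrm z = nrm (st w) ^+ 2.
  by rewrite -(cs_cstar_id HA) (cs_st_invol HA).
have z0 : z != 0.
  apply/eqP => E; move: nz; rewrite E (nrm0_ HA) => /esym /eqP.
  rewrite expf_eq0 /= => /eqP /(cs_nrm_eq0 HA) E'.
  by move/eqP: stw0.
exists (z * z); split.
- move=> e e0; exists (c * a * st w * w * st a * st c).
  have -> : z * z = x * (c * a * st w * w * st a * st c) * x.
    rewrite /z {2}/w (cs_st_mul HA) (cs_st_mul HA) sx /w.
    by rewrite !mulrA.
  by rewrite subrr (nrm0_ HA).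
- exact: sq_pos HA z sz.
- apply/eqP => E.
  have : nrm (st z * z) = nrm z ^+ 2 := cs_cstar_id HA z.
  rewrite sz E (nrm0_ HA) => /esym /eqP; rewrite expf_eq0 /= => /eqP /(cs_nrm_eq0 HA).
  by move/eqP: z0.
move=> f _ _ [v cv].
rewrite ltNge; apply/negP => fle.
have [N HN] := cv eps Heps.
have HNN := HN N (leqnn N).
set g := v N * (z * z) * st (v N) in HNN.
have nb : nrm (1 - g) < 1.
  have -> : 1 - g = f + - (g - (1 - f)) by rewrite opprB addrA [f + _]addrC subrK.
  apply: le_lt_trans (cs_nrm_tri HA _ _) _.
  rewrite (nrmN_ HA); lra.
have [u [_ Hu]] := neumann_ HA _ nb.
rewrite opprB addrC subrK in Hu.
apply: (Ha (u * v N * x * c) (st w * w * st w * st (v N))).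
rewrite -Hu /g /z /w.
by rewrite !mulrA.
Qed.
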